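(* Let $X$ be a finite topological space and $x,y\in X$. Then $\Psi(x,y)=0$ if and only if $\Psi(x,a)\le \Psi(y,a)$ for every $a\in X$ (i.e. every entry in the row of $x$ of the furtherness matrix is at most the corresponding entry in the row of $y$).
   Context: For a finite topological space $X$ and $x\in X$, $U_x$ denotes the minimal open set containing $x$. A nested sequence of open sets around $x$ is a finite sequence $U_0\subsetneq U_1\subsetneq\cdots\subsetneq U_m=X$ of open sets with $U_0=U_x$ such that for each $j$ there is no open set $V$ with $U_j\subsetneq V\subsetneq U_{j+1}$. The furtherness function $\Psi:X\times X\to\{0,1,\dots,|X|-1\}$ is defined by: $\Psi(x,y)$ is the smallest integer $k\ge 0$ such that there exists a nested sequence $(U_j)_{j\ge0}$ of open sets around $x$ with $y\in U_k$. For $X=\{a_1,\dots,a_n\}$, the furtherness matrix $\Psi(X)$ is the $n\times n$ matrix with $(i,j)$ entry $\Psi(a_i,a_j)$. *)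

(* Defs.v *)
From mathcomp Require Import all_boot.
From mathcomp Require Import boolp.
Set Implicit Arguments. Unset Strict Implicit. Unset Printing Implicit Defensive.

(* A finite topological space: a finite carrier T with a family of open sets
   containing the empty set and the whole space, closed under (binary, hence
   all finite, hence all) unions and intersections. *)
Record fintop (T : finType) := FinTop {
  opens : {set {set T}};
  _ : set0 \in opens;
  _ : setT \in opens;
  _ : forall A B, A \in opens -> B \in opens -> A :|: B \in opens;
  _ : forall A B, A \in opens -> B \in opens -> A :&: B \in opens
}.

Section Furtherness.
Variables (T : finType) (t : fintop T).

Definition minopen (x : T) : {set T} :=
  \bigcap_(A in opens t | x \in A) A.

Definition opcover (A B : {set T}) : bool :=
  (A \proper B) && [forall V in opens t, ~~ ((A \proper V) && (V \proper B))].

Definition nested_seq (x : T) (s : seq {set T}) : Prop :=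
  exists rest, [/\ s = minopen x :: rest,
                   all (fun A => A \in opens t) s,
                   path opcover (minopen x) rest &
                   last (minopen x) rest = setT].

Definition further_at (x y : T) (k : nat) : Prop :=
  exists s, nested_seq x s /\ y \in nth set0 s k.

(* Psi(x, y) : the smallest such k (0 if no such k, which never happens) *)
Definition Psi (x y : T) : nat :=
  match pselect (exists k, further_at x y k) with
  | left ex => @ex_minn (fun k => `[< further_at x y k >])
                 (let: ex_intro k h := ex in ex_intro _ k (asboolT h))
  | right _ => 0
  end.

End Furtherness.

(* Main.v *)
Require Import Defs.
From mathcomp Require Import all_boot.
From mathcomp Require Import boolp.

Section Aux.
Variables (T : finType) (t : fintop T).

Lemma op0 : set0 \in opens t. Proof. by case: t. Qed.
Lemma opT : setT \in opens t. Proof. by case: t. Qed.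
Lemma opU A B : A \in opens t -> B \in opens t -> A :|: B \in opens t.
Proof. by case: t A B. Qed.
Lemma opI A B : A \in opens t -> B \in opens t -> A :&: B \in opens t.
Proof. by case: t A B. Qed.

Lemma minopen_open x : minopen t x \in opens t.
Proof.
rewrite /minopen; apply: (big_ind (fun A => A \in opens t)) => //.
- exact: opT.
- exact: opI.
- by move=> A /andP[].
Qed.

Lemma minopen_in x : x \in minopen t x.
Proof. by rewrite /minopen; apply/bigcapP => A /andP[]. Qed.

Lemma minopen_sub x A : A \in opens t -> x \in A -> minopen t x \subset A.
Proof. move=> hA hx; rewrite /minopen.
by apply: (@bigcap_inf T {set T} A (fun B => (B \in opens t) && (x \in B)) (fun B => B)); rewrite hA. Qed.

Lemma chain_ex n : forall A, A \in opens t -> #|~: A| <= n ->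
  exists rest, [/\ path (opcover t) A rest, all (fun B => B \in opens t) rest
                 & last A rest = setT].
Proof.
elim: n => [|n IH] A hA hn.
  exists [::]; split => //=; apply/setP => z; rewrite inE.
  apply: contraT => hz; move: hn; rewrite leqn0 => /eqP/cards0_eq/setP/(_ z).
  by rewrite !inE hz.
have [->|hne] := eqVneq A setT; first by exists [::].
pose P := [pred B | (B \in opens t) && (A \proper B)].
have PT : P setT by rewrite /= opT /= properT hne.
case: (arg_minnP (fun B : {set T} => #|B|) PT) => B /andP[hB hAB] hmin.
have cov : opcover t A B.
  rewrite /opcover hAB /=; apply/forall_inP => V hV; apply/negP => /andP[h1 h2].
  have := hmin V; rewrite /= hV h1 => /(_ isT).
  by rewrite leqNgt (proper_card h2).
have hc : #|~: B| <= n.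
  by rewrite -ltnS; apply: leq_trans hn; apply: proper_card; rewrite properC.
have [rest [p1 p2 p3]] := IH B hB hc.
by exists (B :: rest); split => //=; [rewrite cov p1 | rewrite hB p2].
Qed.

Lemma nested_ex x : exists s, nested_seq t x s.
Proof.
have [rest [p1 p2 p3]] := (@chain_ex _ _ (minopen_open x) (leqnn _)).
by exists (minopen t x :: rest); exists rest; split => //=; rewrite minopen_open.
Qed.

Lemma further_ex x y : exists k, further_at t x y k.
Proof.
have [s [rest [-> h2 h3 h4]]] := nested_ex x.
exists (size rest), (minopen t x :: rest); split; first by exists rest.
by have := nth_last set0 (minopen t x :: rest); rewrite /= => ->; rewrite h4 inE.
Qed.

Lemma PsiP x y : further_at t x y (Psi t x y) /\
  forall k, further_at t x y k -> Psi t x y <= k.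
Proof.
rewrite /Psi; case: pselect => [ex|n]; last by exfalso; apply: n; apply: further_ex.
case: ex_minnP => m /asboolP Hm Hmin; split => // k hk.
by apply: Hmin; apply/asboolP.
Qed.

Lemma cover_join U B C W : U \in opens t -> C \in opens t -> opcover t B C ->
  W \in opens t -> U :|: B \subset W -> W \subset U :|: C ->
  (W \subset U :|: B) || (U :|: C \subset W).
Proof.
move=> hU hC /andP[hBC /forall_inP cov] hW h1 h2.
have := cov _ (opI W C hW hC); rewrite !properE negb_and.
have sB : B \subset W :&: C.
  rewrite subsetI (subset_trans _ h1) ?subsetUr //.
  by case/andP: hBC.
have sC : W :&: C \subset C by rewrite subsetIr.
rewrite sB sC /= !negbK => /orP[h|h].
- apply/orP; left; apply/subsetP => z hz.
  have := subsetP h2 z hz; rewrite !inE => /orP[->//|zc].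
  by apply/orP; right; apply: (subsetP h); rewrite inE hz zc.
- apply/orP; right; rewrite subUset (subset_trans _ h1) ?subsetUl //=.
  by apply: subset_trans h _; rewrite subsetIl.
Qed.

Lemma join_chain U (hU : U \in opens t) : forall rest B, B \in opens t ->
  path (opcover t) B rest -> all (fun V => V \in opens t) rest ->
  last B rest = setT ->
  exists rest2, [/\ path (opcover t) (U :|: B) rest2,
     all (fun V => V \in opens t) rest2, last (U :|: B) rest2 = setT &
     forall k, exists2 k', k' <= k &
       nth set0 (B :: rest) k \subset nth set0 (U :|: B :: rest2) k'].
Proof.
elim => [|C rest IH] B hB /=.
  move=> _ _ ->; exists [::]; split => //=.
    by apply/setP => z; rewrite !inE orbT.
  case=> [|k]; exists 0 => //=; first by rewrite subsetUr.
  by rewrite nth_nil sub0set.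
case/andP => hBC hp /andP[hC hall] hl.
have [rest2 [q1 q2 q3 q4]] := IH C hC hp hall hl.
have sBC : B \subset C by case/andP: hBC => /andP[].
have sUBC : U :|: B \subset U :|: C by rewrite setUS.
have [heq|hne] := eqVneq (U :|: B) (U :|: C).
  exists rest2; rewrite heq; split => //.
  case=> [|k]; first by exists 0 => //=; rewrite -heq subsetUr.
  by have [k' hk' hs] := q4 k; exists k' => //; apply: leqW.
exists (U :|: C :: rest2); split => //=; last first.
- case=> [|k]; first by exists 0 => //=; rewrite subsetUr.
  by have [k' hk' hs] := q4 k; exists k'.+1.
- by rewrite opU.
rewrite q1 andbT /opcover.
have pr : U :|: B \proper U :|: C.
  by rewrite properEneq hne sUBC.
rewrite pr /=; apply/forall_inP => V hV; apply/negP => /andP[p1 p2].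
have := cover_join U B C V hU hC hBC hV (proper_sub p1) (proper_sub p2).
by case/orP => h; [move: p1 | move: p2]; rewrite properE h /= ?andbF.
Qed.

End Aux.
Arguments PsiP {T} t x y.
Arguments minopen_open {T} t x.
Arguments minopen_in {T} t x.
Arguments minopen_sub {T} t x A.
Arguments nested_ex {T} t x.
Arguments join_chain {T} t U hU rest B.

Theorem mainTheorem13 (T : finType) (t : fintop T) (x y : T) :
  Psi t x y = 0 <-> (forall a : T, Psi t x a <= Psi t y a).
Proof.
split.
- move=> h0 a.
  have [[s [[rest [-> _ _ _]] hy]] _] := PsiP t x y.
  rewrite h0 /= in hy.
  have sub : minopen t y \subset minopen t x by apply: minopen_sub => //; exact: minopen_open.
  have [[s' [[rest' [-> a2 a3 a4]] ha]] _] := PsiP t y a.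
  move: a2 => /= /andP[_ a2].
  have [rest2 [q1 q2 q3 q4]] := join_chain t _ (minopen_open t x) _ _ (minopen_open t y) a3 a2 a4.
  have e : minopen t x :|: minopen t y = minopen t x.
    by apply/setUidPl.
  rewrite e in q1 q2 q3 q4.
  have [k' hk' hs] := q4 (Psi t y a).
  have [_ hmin] := PsiP t x a.
  apply: leq_trans (hmin k' _) hk'.
  exists (minopen t x :: rest2); split; last by apply: (subsetP hs).
  by exists rest2; split => //=; rewrite minopen_open.
- move=> h; apply/eqP; rewrite -leqn0; apply: leq_trans (h y) _.
  have [_ hmin] := PsiP t y y.
  apply: hmin; have [s [rest [-> h2 h3 h4]]] := nested_ex t y.
  exists (minopen t y :: rest); split; first by exists rest.
  exact: minopen_in.
Qed.
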